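(* Let $R$ be a commutative Noetherian ring, $M$ a faithful primeful $R$-module having at least one prime submodule, $X=\mathrm{Spec}(M)$, $N$ an $R$-module, $K\le M$, and $U=X\setminus V(K)$. Then $\Gamma_{(K:M)}(N)=\ker(\epsilon_N^U)$; in particular $\ker(\epsilon_N^U)$ is $(K:M)$-torsion.
   Context: For a submodule $L$ of an $R$-module $M$, $(L:M)=\{r\in R\mid rM\subseteq L\}$. A submodule $P$ of $M$ is prime if $P\neq M$ and whenever $rm\in P$ ($r\in R$, $m\in M$) then $r\in (P:M)$ or $m\in P$. $\mathrm{Spec}(M)$ is the set of prime submodules. $M$ is faithful if $\mathrm{Ann}_R(M)=0$; primeful if $M=0$ or $\mathrm{Spec}(M)\to\mathrm{Spec}(R/\mathrm{Ann}(M))$, $P\mapsto(P:M)/\mathrm{Ann}(M)$, is surjective. For $L\le M$, $V(L)=\{P\in X\mid (P:M)\supseteq (L:M)\}$; these are the closed sets of the Zariski topology. For open $U\subseteq X$, $\mathrm{Supp}(U)=\{(P:M)\mid P\in U\}$. $\mathcal{A}(N,M)(U)$ is the $R$-module of families $(\gamma_{\mathfrak p})_{\mathfrak p\in\mathrm{Supp}(U)}\in\prod_{\mathfrak p\in\mathrm{Supp}(U)}N_{\mathfrak p}$ such that for each $Q\in U$ there exist an open neighbourhood $W\subseteq U$ of $Q$ and $s\in R$, $m\in N$ with $s\notin (P:M)$ and $\gamma_{(P:M)}=m/s$ for every $P\in W$. $\epsilon_N^U:N\to\mathcal{A}(N,M)(U)$ is $n\mapsto(n/1)_{\mathfrak p\in\mathrm{Supp}(U)}$.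 For an ideal $I$, $\Gamma_I(H)=\bigcup_{n\ge1}(0:_H I^n)$, and $H$ is $I$-torsion if $H=\Gamma_I(H)$. *)

(* Defs.v *)
From mathcomp Require Import all_boot all_algebra.
Set Implicit Arguments. Unset Strict Implicit. Unset Printing Implicit Defensive.
Import GRing.Theory.
Local Open Scope ring_scope.

Section ModuleDefs.
Variable R : comNzRingType.

Definition is_ideal (I : R -> Prop) : Prop :=
  I 0 /\ (forall x y, I x -> I y -> I (x + y)) /\ (forall r x, I x -> I (r * x)).

Definition prime_ideal (p : R -> Prop) : Prop :=
  is_ideal p /\ ~ p 1 /\ (forall a b, p (a * b) -> p a \/ p b).

Definition noetherian : Prop :=
  forall I : nat -> R -> Prop, (forall n, is_ideal (I n)) ->
    (forall n r, I n r -> I n.+1 r) ->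
    exists k, forall n, (k <= n)%N -> forall r, I n r -> I k r.

Definition ideal_mul (I J : R -> Prop) : R -> Prop := fun r =>
  exists s : seq (R * R), (forall x, x \in s -> I x.1 /\ J x.2) /\
                          r = \sum_(x <- s) x.1 * x.2.

Fixpoint ideal_pow (I : R -> Prop) (n : nat) : R -> Prop :=
  match n with
  | 0 => fun _ => True
  | n'.+1 => ideal_mul (ideal_pow I n') I
  end.

Section OneModule.
Variable M : lmodType R.

Definition is_submod (L : M -> Prop) : Prop :=
  L 0 /\ (forall x y, L x -> L y -> L (x + y)) /\ (forall r x, L x -> L (r *: x)).

Definition colon (L : M -> Prop) : R -> Prop := fun r => forall m, L (r *: m).

Definition prime_submod (P : M -> Prop) : Prop :=
  is_submod P /\ (exists m, ~ P m) /\
  (forall r m, P (r *: m) -> colon P r \/ P m).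

Definition annihilator : R -> Prop := fun r => forall m : M, r *: m = 0.

Definition faithful : Prop := forall r, annihilator r -> r = 0.

(* primeful: M = 0, or every prime of R/Ann(M) (i.e. every prime ideal of R
   containing Ann(M)) is of the form (P:M)/Ann(M) for some prime submodule P *)
Definition primeful : Prop :=
  (forall m : M, m = 0) \/
  (forall q, prime_ideal q -> (forall r, annihilator r -> q r) ->
     exists P, prime_submod P /\ (forall r, colon P r <-> q r)).

Definition V (L : M -> Prop) : (M -> Prop) -> Prop := fun P =>
  prime_submod P /\ (forall r, colon L r -> colon P r).

Definition compV (L : M -> Prop) : (M -> Prop) -> Prop := fun P =>
  prime_submod P /\ ~ V L P.

Definition zopen (W : (M -> Prop) -> Prop) : Prop :=
  exists L, is_submod L /\ forall P, W P <-> compV L P.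

End OneModule.

Section Localization.
Variable N : lmodType R.

(* equality of fractions a.1/a.2 and b.1/b.2 in N_p *)
Definition loc_eq (p : R -> Prop) (a b : N * R) : Prop :=
  exists t, ~ p t /\ t *: (b.2 *: a.1 - a.2 *: b.1) = 0.

Variable M : lmodType R.

(* A family in prod_{p in Supp U} N_p, indexed by ideals p = (P:M);
   gamma p is a representative fraction (m, s) of gamma_p. *)
Definition family (U : (M -> Prop) -> Prop) (g : (R -> Prop) -> N * R) : Prop :=
  forall P, U P -> ~ colon P (g (colon P)).2.

Definition fam_eq (U : (M -> Prop) -> Prop) (g h : (R -> Prop) -> N * R) : Prop :=
  forall P, U P -> loc_eq (colon P) (g (colon P)) (h (colon P)).

Definition is_section (U : (M -> Prop) -> Prop) (g : (R -> Prop) -> N * R) : Prop :=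
  family U g /\
  forall Q, U Q -> exists W, zopen W /\ (forall P, W P -> U P) /\ W Q /\
    exists (s : R) (m : N), forall P, W P ->
      ~ colon P s /\ loc_eq (colon P) (g (colon P)) (m, s).

Definition eps (n : N) : (R -> Prop) -> N * R := fun _ => (n, 1).

Definition ker_eps (U : (M -> Prop) -> Prop) : N -> Prop := fun n =>
  fam_eq U (eps n) (eps 0).

End Localization.

Definition Gamma (N : lmodType R) (I : R -> Prop) (H : N -> Prop) : N -> Prop :=
  fun x => H x /\ exists n, (0 < n)%N /\ forall r, ideal_pow I n r -> r *: x = 0.

Definition torsion (N : lmodType R) (I : R -> Prop) (H : N -> Prop) : Prop :=
  forall x, H x -> Gamma I H x.

End ModuleDefs.

(* Main.v *)
Require Import Defs.
From mathcomp Require Import all_boot all_algebra.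
From mathcomp Require Import ring.
From Stdlib Require Import Classical ClassicalEpsilon.
Set Implicit Arguments. Unset Strict Implicit. Unset Printing Implicit Defensive.
Import GRing.Theory.
Local Open Scope ring_scope.

Section Helpers.
Variable R : comNzRingType.
Variable N : lmodType R.

Lemma sum_lemma (n : N) (r : R) (s : seq (R * R)) :
  (forall z, z \in s -> (r * (z.1 * z.2)) *: n = 0) ->
  (r * \sum_(z <- s) z.1 * z.2) *: n = 0.
Proof.
elim: s => [|z s IH] H; first by rewrite big_nil mulr0 scale0r.
rewrite big_cons mulrDr scalerDl H ?mem_head // IH ?addr0 // => w Hw.
by apply: H; rewrite inE Hw orbT.
Qed.

Definition Lk (I : R -> Prop) (n : N) (k : nat) : R -> Prop :=
  fun r => forall x, ideal_pow I k x -> (r * x) *: n = 0.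

Lemma Lk_ideal I n k : is_ideal (Lk I n k).
Proof.
split; [|split].
- by move=> x _; rewrite mul0r scale0r.
- by move=> x y Hx Hy z Hz; rewrite mulrDl scalerDl Hx // Hy // addr0.
- by move=> r x Hx z Hz; rewrite -mulrA -scalerA Hx // scaler0.
Qed.

Lemma Lk_mono I n k r : Lk I n k r -> Lk I n k.+1 r.
Proof.
move=> H x [s [Hs ->]]; apply: sum_lemma => z Hz.
have -> : r * (z.1 * z.2) = z.2 * (r * z.1) by ring.
by rewrite -scalerA H ?scaler0 //; case: (Hs z Hz).
Qed.

Lemma Lk_colon I n k r : (forall a, I a -> Lk I n k (r * a)) -> Lk I n k.+1 r.
Proof.
move=> H x [s [Hs ->]]; apply: sum_lemma => z Hz.
have -> : r * (z.1 * z.2) = (r * z.2) * z.1 by ring.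
by case: (Hs z Hz) => H1 H2; apply: H.
Qed.

Lemma pow_in (I : R -> Prop) a k : I a -> ideal_pow I k (a ^+ k).
Proof.
move=> Ha; elim: k => [|k IH] //=.
exists [:: (a ^+ k, a)]; split.
  by move=> x; rewrite inE => /eqP ->.
by rewrite big_cons big_nil addr0 exprSr.
Qed.

Lemma ideal_colon (L : R -> Prop) x : is_ideal L -> is_ideal (fun r => L (r * x)).
Proof.
move=> [H0 [HD HM]]; split; [|split].
- by rewrite mul0r.
- by move=> a b Ha Hb; rewrite mulrDl; apply: HD.
- by move=> r a Ha; rewrite -mulrA; apply: HM.
Qed.

Lemma exists_max (L : R -> Prop) : is_ideal L -> noetherian R -> ~ L 1 ->
  exists x, ~ L x /\ forall y, ~ L y -> (forall r, L (r * x) -> L (r * y)) ->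
     forall r, L (r * y) -> L (r * x).
Proof.
move=> HL Hno HL1; apply: NNPP => Hne.
have step : forall x, exists y, ~ L x -> ~ L y /\ (forall r, L (r * x) -> L (r * y))
    /\ exists r, L (r * y) /\ ~ L (r * x).
  move=> x; case: (classic (L x)) => Hx; first by exists x.
  apply: NNPP => Hn; apply: Hne; exists x; split => // y Hy Hinc r Hr.
  apply: NNPP => Hrx; apply: Hn; exists y => _; split => //; split => //.
  by exists r.
pose g x := proj1_sig (constructive_indefinite_description _ (step x)).
have gP x : ~ L x -> ~ L (g x) /\ (forall r, L (r * x) -> L (r * g x))
    /\ exists r, L (r * g x) /\ ~ L (r * x).
  by move=> Hx; rewrite /g; case: constructive_indefinite_description => y Hy /=; apply: Hy.
pose xs k := iter k g 1.
have Hxs : forall k, ~ L (xs k).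
  by elim=> [|k IH] //=; case: (gP _ IH).
have [k0 Hk0] := Hno (fun k r => L (r * xs k)) (fun k => ideal_colon (xs k) HL)
  (fun k r => proj1 (proj2 (gP _ (Hxs k))) r).
case: (gP _ (Hxs k0)) => _ [_ [r [Hr Hnr]]].
by apply: Hnr; apply: (Hk0 k0.+1 (leqnSn k0)).
Qed.

Lemma prime_colon (M : lmodType R) (P : M -> Prop) a b :
  prime_submod P -> colon P (a * b) -> colon P a \/ colon P b.
Proof.
move=> [_ [_ Hp]] Hab; case: (classic (colon P a)) => Ha; [by left|right].
move=> m; have := Hab m; rewrite -scalerA => /Hp [] //.
Qed.

End Helpers.

Theorem proposition3p8 (R : comNzRingType) (M N : lmodType R) (K : M -> Prop) :
  noetherian R -> faithful M -> primeful M ->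
  (exists P : M -> Prop, prime_submod P) -> is_submod K ->
  (forall n : N, Gamma (colon K) (fun _ => True) n <-> @ker_eps R N M (compV K) n) /\
  torsion (colon K) (@ker_eps R N M (compV K)).
Proof.
move=> Hno Hfa Hpf _ HK.
have main : forall n : N, Gamma (colon K) (fun _ => True) n <-> @ker_eps R N M (compV K) n.
  move=> n; split.
  - move=> [_ [k [Hk Hpow]]] P [HP HV].
    have [a [Ha Hna]] : exists a, colon K a /\ ~ colon P a.
      apply: NNPP => Hn; apply: HV; split => // r Hr.
      by apply: NNPP => Hr'; apply: Hn; exists r.
    exists (a ^+ k); split.
      elim: (k) => [|j IH] /=.
        case: HP => _ [[m Hm] _] H1; apply: Hm; have := H1 m; by rewrite scale1r.
      by rewrite exprSr => /(prime_colon HP) [].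
    by rewrite /= scale1r scaler0 subr0; apply: Hpow; apply: pow_in.
  - move=> Hker.
    have Hq : forall q, prime_ideal q -> (forall r, r *: n = 0 -> q r) ->
        forall a, colon K a -> q a.
      move=> q Hqp HJ a Ha; apply: NNPP => Hna.
      case: Hpf => [H0|Hpf].
        have := @oner_neq0 R; rewrite (Hfa 1) ?eqxx // => m; by rewrite H0 scaler0.
      have [P [HP Hcol]] : exists P : M -> Prop, prime_submod P /\ (forall r, colon P r <-> q r).
        apply: (Hpf q Hqp) => r Hr; rewrite (Hfa r Hr); by case: Hqp => [[]].
      have HU : compV K P.
        by split => // -[_ HV]; apply: Hna; apply/Hcol; apply: HV.
      have [t [Ht Htn]] := Hker P HU.
      apply: Ht; apply/Hcol; apply: HJ.
      by move: Htn; rewrite /= scale1r scaler0 subr0.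
    pose I := colon K.
    have [k0 Hk0] := Hno (fun k => Lk I n k) (fun k => Lk_ideal I n k)
      (fun k r H => Lk_mono H).
    have L1 : Lk I n k0 1.
      apply: NNPP => HL1.
      have [x [Hx Hmax]] := exists_max (Lk_ideal I n k0) Hno HL1.
      have Hqp : prime_ideal (fun r => Lk I n k0 (r * x)).
        split; first exact: ideal_colon (Lk_ideal I n k0).
        split; first by rewrite mul1r.
        move=> a b Hab; case: (classic (Lk I n k0 (b * x))) => Hb; [by right|left].
        have Hinc : forall r, Lk I n k0 (r * x) -> Lk I n k0 (r * (b * x)).
          move=> r Hr; have -> : r * (b * x) = b * (r * x) by ring.
          by case: (Lk_ideal I n k0) => _ [_ HM]; apply: HM.
        by apply: (Hmax _ Hb Hinc); rewrite mulrA.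
      have HJ : forall r, r *: n = 0 -> Lk I n k0 (r * x).
        move=> r Hr y Hy.
        have -> : r * x * y = (x * y) * r by ring.
        by rewrite -scalerA Hr scaler0.
      apply: Hx; apply: (Hk0 k0.+1 (leqnSn k0)); apply: Lk_colon => a Ha.
      by rewrite mulrC; apply: (Hq _ Hqp HJ).
    split => //; exists k0.+1; split => // r Hr.
    by have := Lk_mono L1 Hr; rewrite mul1r.
split => // x Hx; split => //; by case: ((main x).2 Hx).
Qed.
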